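(* Let $x=(x_1,x_2,x_3,x_4)\in(0,1)^4$ and $y=(y_1,y_2,y_3,y_4)\in(0,1)^4$, and write $\bar z:=1-z$. Let $$\mathbf M=\begin{pmatrix} x_1y_1 & x_2y_3 & x_3y_2 & x_4y_4\\ x_1\bar y_1 & x_2\bar y_3 & x_3\bar y_2 & x_4\bar y_4\\ \bar x_1 y_1 & \bar x_2 y_3 & \bar x_3 y_2 & \bar x_4 y_4\\ \bar x_1\bar y_1 & \bar x_2\bar y_3 & \bar x_3\bar y_2 & \bar x_4\bar y_4\end{pmatrix},$$ and let $\mathbf p_{\mathrm e}=(p_{\mathrm{CCe}},p_{\mathrm{CDe}},p_{\mathrm{DCe}},p_{\mathrm{DDe}})^{\mathrm T}$ be the unique probability vector with $\mathbf M\mathbf p_{\mathrm e}=\mathbf p_{\mathrm e}$, regarded as a function of $x_1$ (all other variables fixed). Put $\mathbf p_{\mathrm{CC(C)}}=(y_1,\bar y_1,0,0)^{\mathrm T}$ and $\mathbf p_{\mathrm{CC(D)}}=(0,0,y_1,\bar y_1)^{\mathrm T}$. Then the series below converges and $$\frac{\partial \mathbf p_{\mathrm e}}{\partial x_1}=p_{\mathrm{CCe}}\lim_{n\to\infty}\sum_{t=0}^{n}\mathbf M^t\bigl(\mathbf p_{\mathrm{CC(C)}}-\mathbf p_{\mathrm{CC(D)}}\bigr).$$ Consequently, for any payoff vector $\mathbf u=(R,S,T,P)^{\mathrm T}$, the learning dynamics $\dot x_1=x_1\bar x_1\,p_{\mathrm{CCe}}\sum_{t=0}^{\infty}\mathbf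 M^t(\mathbf p_{\mathrm{CC(C)}}-\mathbf p_{\mathrm{CC(D)}})\cdot\mathbf u$ coincide with $\dot x_1=x_1\bar x_1\,\frac{\partial\mathbf p_{\mathrm e}}{\partial x_1}\cdot\mathbf u$.
   Context: Setting: iterated two-player prisoner's dilemma with memory-one strategies. The states of one round are ordered CC, CD, DC, DD (own action first, opponent's second, from player $x$'s viewpoint). $x_i$ (resp. $y_i$) is the probability that player $x$ (resp. the opponent $y$) cooperates when the previous round's outcome, from its own viewpoint, was the $i$-th state. $\mathbf M$ is the Markov transition matrix of the outcome distribution (column-stochastic, $\mathbf p'=\mathbf M\mathbf p$), and $\mathbf p_{\mathrm e}$ its stationary distribution. *)

(* Defs.v *)
From HB Require Import structures.
From mathcomp Require Import all_boot all_order all_algebra.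
From mathcomp Require Import all_classical all_reals all_analysis.
Set Implicit Arguments. Unset Strict Implicit. Unset Printing Implicit Defensive.
Import Order.TTheory GRing.Theory Num.Theory.
Local Open Scope ring_scope.

(* States ordered CC, CD, DC, DD (indices 0,1,2,3). Column j = previous state,
   row i = next state; M is column-stochastic, p' = M p. *)
Definition transM {R : pzRingType} (x1 x2 x3 x4 y1 y2 y3 y4 : R) : 'M[R]_4 :=
  let rows := [:: [:: x1 * y1; x2 * y3; x3 * y2; x4 * y4];
                  [:: x1 * (1 - y1); x2 * (1 - y3); x3 * (1 - y2); x4 * (1 - y4)];
                  [:: (1 - x1) * y1; (1 - x2) * y3; (1 - x3) * y2; (1 - x4) * y4];
                  [:: (1 - x1) * (1 - y1); (1 - x2) * (1 - y3);
                      (1 - x3) * (1 - y2); (1 - x4) * (1 - y4)]] in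
  \matrix_(i < 4, j < 4) nth 0 (nth [::] rows i) j.

Definition prob_vec {R : numDomainType} (p : 'cV[R]_4) : Prop :=
  (forall i, 0 <= p i 0) /\ \sum_(i < 4) p i 0 = 1.

Definition stationary {R : numDomainType} (M : 'M[R]_4) (p : 'cV[R]_4) : Prop :=
  prob_vec p /\ M *m p = p.

Definition cv4 {R : pzRingType} (a b c d : R) : 'cV[R]_4 :=
  \col_(i < 4) nth 0 [:: a; b; c; d] i.

Definition in01 {R : numDomainType} (z : R) : Prop := 0 < z < 1.

(* Main.v *)
Require Import Defs.
From HB Require Import structures.
From mathcomp Require Import all_boot all_order all_algebra.
From mathcomp Require Import all_classical all_reals all_analysis.
From mathcomp Require Import ring lra.
Import Order.TTheory GRing.Theory Num.Theory.
Set Implicit Arguments. Unset Strict Implicit.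
Local Open Scope ring_scope.

Lemma sum4 (V : nmodType) (F : 'I_4 -> V) : \sum_(i < 4) F i = F 0 + F 1 + F 2%R + F 3%R.
Proof.
rewrite !big_ord_recr big_ord0 /= add0r. 
by congr (_ + _ + _ + _); congr F; apply/val_inj.
Qed.

Lemma ord4P (P : 'I_4 -> Prop) : P 0 -> P 1 -> P 2%R -> P 3%R -> forall i, P i.
Proof.
move=> p0 p1 p2 p3 [[|[|[|[|i]]]] Hi].
- by have -> : Ordinal Hi = 0 by apply/val_inj.
- by have -> : Ordinal Hi = 1 by apply/val_inj.
- by have -> : Ordinal Hi = 2%R by apply/val_inj.
- by have -> : Ordinal Hi = 3%R by apply/val_inj.
- by [].
Qed.


Module Aux.
Import numFieldNormedType.Exports.
Section Gen.
Variable R : realType.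

Lemma in01P (z : R) : in01 z -> 0 < z /\ 0 < 1 - z.
Proof. by move=> /andP[h1 h2]; rewrite subr_gt0. Qed.

Lemma transM_pos (a1 a2 a3 a4 b1 b2 b3 b4 : R) :
  in01 a1 -> in01 a2 -> in01 a3 -> in01 a4 ->
  in01 b1 -> in01 b2 -> in01 b3 -> in01 b4 ->
  forall i j, 0 < transM a1 a2 a3 a4 b1 b2 b3 b4 i j.
Proof.
move=> /in01P[? ?] /in01P[? ?] /in01P[? ?] /in01P[? ?].
move=> /in01P[? ?] /in01P[? ?] /in01P[? ?] /in01P[? ?].
apply: ord4P; apply: ord4P; rewrite /transM mxE /=; exact: mulr_gt0.
Qed.

Lemma transM_col (a1 a2 a3 a4 b1 b2 b3 b4 : R) j :
  \sum_i transM a1 a2 a3 a4 b1 b2 b3 b4 i j = 1.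
Proof.
rewrite sum4 /transM !mxE /=.
move: j; apply: ord4P => /=; ring.
Qed.

Lemma transM_shift (t s a2 a3 a4 b1 b2 b3 b4 : R) (v : 'cV[R]_4) :
  transM t a2 a3 a4 b1 b2 b3 b4 *m v =
  transM s a2 a3 a4 b1 b2 b3 b4 *m v +
  ((t - s) * v 0 0) *: (cv4 b1 (1 - b1) 0 0 - cv4 0 0 b1 (1 - b1)).
Proof.
apply/matrixP => i j; rewrite (ord1 j) !mxE !sum4 /transM /cv4 !mxE /=.
move: i; apply: ord4P; rewrite /=; ring.
Qed.

Lemma min_pos n (M : 'M[R]_n.+1) :
  (forall i j, 0 < M i j) -> exists2 d, 0 < d & forall i j, d <= M i j.
Proof.
move=> Mp.
case: (@arg_minP _ R _ (ord0, ord0) predT (fun k : 'I_n.+1 * 'I_n.+1 => M k.1 k.2) isT).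
move=> k _ H; exists (M k.1 k.2) => // i j; exact: (H (i, j)).
Qed.

Definition N1 {n} (v : 'cV[R]_n) := \sum_i `|v i 0|.
Definition S1 {n} (v : 'cV[R]_n) := \sum_i v i 0.

Lemma S1_mul n (M : 'M[R]_n) v : (forall j, \sum_i M i j = 1) -> S1 (M *m v) = S1 v.
Proof.
move=> cs; rewrite /S1.
under eq_bigr do rewrite mxE.
rewrite exchange_big /=; apply: eq_bigr => j _.
by rewrite -mulr_suml cs mul1r.
Qed.

Lemma contract n (M : 'M[R]_n) (d : R) v :
  (forall j, \sum_i M i j = 1) -> (forall i j, d <= M i j) -> S1 v = 0 ->
  N1 (M *m v) <= (1 - n%:R * d) * N1 v.
Proof.
move=> cs dl s0; rewrite /N1.
have E i : (M *m v) i 0 = \sum_j (M i j - d) * v j 0.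
  rewrite mxE; under [RHS]eq_bigr do rewrite mulrBl.
  by rewrite sumrB -mulr_sumr; move: s0; rewrite /S1 => ->; rewrite mulr0 subr0.
apply: (le_trans (y := \sum_i \sum_j (M i j - d) * `|v j 0|)).
  apply: ler_sum => i _; rewrite E; apply: (le_trans (ler_norm_sum _ _ _)).
  apply: ler_sum => j _; rewrite normrM ger0_norm // subr_ge0; exact: dl.
rewrite exchange_big /= mulr_sumr; apply: ler_sum => j _.
rewrite -mulr_suml sumrB cs sumr_const card_ord.
by rewrite mulr_natl.
Qed.


Lemma N1_ge0 n (v : 'cV[R]_n) : 0 <= N1 v.
Proof. by apply: sumr_ge0 => i _. Qed.

Lemma N1_entry n (v : 'cV[R]_n) i : `|v i 0| <= N1 v.
Proof.
rewrite /N1 (bigD1 i) //= lerDl; by apply: sumr_ge0 => j _.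
Qed.

Lemma pow_contract n (M : 'M[R]_n.+1) (c : R) v :
  0 <= c ->
  (forall v, S1 (M *m v) = S1 v) ->
  (forall v, S1 v = 0 -> N1 (M *m v) <= c * N1 v) ->
  S1 v = 0 -> forall k, S1 (M ^+ k *m v) = 0 /\ N1 (M ^+ k *m v) <= c ^+ k * N1 v.
Proof.
move=> c0 Sp Cp s0; elim => [|k [IH1 IH2]].
  by rewrite expr0 mul1mx mul1r.
rewrite exprS -mulmxE -mulmxA Sp IH1; split => //.
apply: le_trans (Cp _ IH1) _; rewrite exprS -mulrA; exact: ler_wpM2l.
Qed.

Lemma uniq0 n (M : 'M[R]_n) (c : R) u :
  c < 1 -> (forall v, S1 v = 0 -> N1 (M *m v) <= c * N1 v) ->
  M *m u = u -> S1 u = 0 -> u = 0.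
Proof.
move=> c1 Cp Mu s0.
have H := Cp _ s0; rewrite Mu in H.
have N0 : N1 u <= 0.
  have : (1 - c) * N1 u <= 0 by rewrite mulrBl mul1r subr_le0.
  by rewrite pmulr_rle0 // subr_gt0.
apply/matrixP => i j; rewrite (ord1 j) mxE.
apply/normr0_eq0/le_anti; rewrite normr_ge0 andbT.
apply: le_trans N0; exact: N1_entry.
Qed.


Lemma prob_le1 (p : 'cV[R]_4) i : prob_vec p -> 0 <= p i 0 <= 1.
Proof.
move=> [p0 p1]; rewrite p0 /= -p1 (bigD1 i) //= lerDl.
by apply: sumr_ge0 => j _.
Qed.

Lemma stat_pos (M : 'M[R]_4) p d : 0 < d -> (forall i j, d <= M i j) ->
  stationary M p -> 0 < p 0 0.
Proof.
move=> d0 dle [[pn ps] Mp].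
rewrite -Mp mxE; apply: (lt_le_trans d0).
have -> : d = \sum_j d * p j 0 by rewrite -mulr_sumr ps mulr1.
apply: ler_sum => j _; apply: ler_wpM2r => //; exact: dle.
Qed.

End Gen.

Lemma main_aux (R : realType) (x1 x2 x3 x4 y1 y2 y3 y4 : R)
  (pe : R -> 'cV[R]_4) :
  in01 x1 -> in01 x2 -> in01 x3 -> in01 x4 ->
  in01 y1 -> in01 y2 -> in01 y3 -> in01 y4 ->
  (forall t : R, in01 t ->
     stationary (transM t x2 x3 x4 y1 y2 y3 y4) (pe t)) ->
  let M := transM x1 x2 x3 x4 y1 y2 y3 y4 in
  let dv := cv4 y1 (1 - y1) 0 0 - cv4 0 0 y1 (1 - y1) in
  let S := fun (i : 'I_4) (n : nat) =>
             (\sum_(t < n.+1) (M ^+ t *m dv)) i 0 in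
  (forall i : 'I_4,
     cvgn (S i) /\
     derivable (fun t => pe t i 0) x1 1 /\
     derive1 (fun t => pe t i 0) x1 = pe x1 0 0 * limn (S i)) /\
  (forall u : 'cV[R]_4,
     x1 * (1 - x1) * (pe x1 0 0 * \sum_(i < 4) limn (S i) * u i 0)
     = x1 * (1 - x1) * \sum_(i < 4) derive1 (fun t => pe t i 0) x1 * u i 0).
Proof.
move=> h1 h2 h3 h4 k1 k2 k3 k4 Hst M dv S.
have Mpos := transM_pos h1 h2 h3 h4 k1 k2 k3 k4.
have [d d0 dle] := min_pos Mpos.
have cs := transM_col x1 x2 x3 x4 y1 y2 y3 y4.
pose c := 1 - 4%:R * d.
have Cp : forall v, S1 v = 0 -> N1 (M *m v) <= c * N1 v.
  by move=> v; apply: contract.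
have Sp : forall v, S1 (M *m v) = S1 v by move=> v; apply: S1_mul.
have c0 : 0 <= c.
  have : \sum_(i < 4) d <= \sum_i M i 0 by apply: ler_sum => i _; apply: dle.
  by rewrite sumr_const card_ord cs subr_ge0 mulr_natl.
have c1 : c < 1 by rewrite ltrBlDr ltrDl mulr_gt0.
have shift_ : forall t v, transM t x2 x3 x4 y1 y2 y3 y4 *m v
    = M *m v + ((t - x1) * v 0 0) *: dv.
  by move=> t v; apply: transM_shift.
have Hx1 := Hst x1 h1.
have Mpx : M *m pe x1 = pe x1 by case: Hx1.
have Mpt : forall t, in01 t -> M *m pe t = pe t - ((t - x1) * pe t 0 0) *: dv.
  move=> t ht; case: (Hst t ht) => _ E.
  have := shift_ t (pe t); rewrite E => H.
  by apply/eqP; rewrite eq_sym subr_eq; apply/eqP.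
have S1p : forall t, in01 t -> S1 (pe t) = 1.
  by move=> t ht; case: (Hst t ht) => -[].
have S1B : forall (a b : 'cV[R]_4), S1 (a - b) = S1 a - S1 b.
  by move=> a b; rewrite /S1 -sumrB; apply: eq_bigr => j _; rewrite !mxE.
have S1Z : forall k (a : 'cV[R]_4), S1 (k *: a) = k * S1 a.
  by move=> k a; rewrite /S1 mulr_sumr; apply: eq_bigr => j _; rewrite !mxE.
have S1D : forall (a b : 'cV[R]_4), S1 (a + b) = S1 a + S1 b.
  by move=> a b; rewrite /S1 -big_split; apply: eq_bigr => j _; rewrite !mxE.
have S1dv : S1 dv = 0.
  by rewrite /S1 /dv sum4 !mxE /=; ring.
pose t0 := x1 / 2.
have ht0 : in01 t0.
  case/andP: h1 => a b; apply/andP; split; rewrite /t0; lra.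
have p0pos : 0 < pe t0 0 0.
  have [d' d'0 d'le] := min_pos (transM_pos ht0 h2 h3 h4 k1 k2 k3 k4).
  exact: (stat_pos d'0 d'le (Hst t0 ht0)).
pose k := (t0 - x1) * pe t0 0 0.
have k0 : k != 0.
  rewrite mulf_neq0 //; last by rewrite gt_eqF.
  rewrite lt_eqF //; case/andP: h1 => a b; rewrite /t0; lra.
pose w := k^-1 *: (pe t0 - pe x1).
have Mw : M *m w = w - dv.
  rewrite /w -scalemxAr mulmxBr Mpt // Mpx.
  rewrite -/k addrAC scalerBr scalerA mulVf // scale1r.
  done.
have Sw : S1 w = 0 by rewrite S1Z S1B !S1p // subrr mulr0.
have rel : forall t, in01 t -> pe t = pe x1 + ((t - x1) * pe t 0 0) *: w.
  move=> t ht; apply/eqP; rewrite -subr_eq0; apply/eqP.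
  apply: (uniq0 c1 Cp).
    rewrite mulmxBr mulmxDr -scalemxAr Mpt // Mpx Mw.
    by apply/matrixP => a b; rewrite !mxE; ring.
  by rewrite S1B S1D S1Z Sw !S1p // mulr0 addr0 subrr.
have Edv : dv = w - M *m w by rewrite Mw opprB addrC subrK.
have Sn : forall n, \sum_(t < n.+1) (M ^+ t *m dv) = w - M ^+ n.+1 *m w.
  elim => [|n IH].
    by rewrite big_ord_recr big_ord0 /= add0r expr0 mul1mx expr1 Edv.
  rewrite big_ord_recr /= IH Edv mulmxBr [M ^+ n.+2]exprSr -mulmxE -mulmxA.
  by rewrite addrA subrK.
have Nw := pow_contract c0 Sp Cp Sw.
have cvS : forall i, ((fun n => S i n : R) @ \oo --> (w i 0 : R))%classic.
  move=> i; apply/cvgrPdist_le => e e0.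
  have N0 : 0 <= N1 w := N1_ge0 w.
  have cabs : `|c| < 1 by rewrite ger0_norm.
  have e'0 : 0 < e / (N1 w + 1) by rewrite divr_gt0 //; lra.
  have := (cvgrPdist_le _ _).1 (cvg_expr cabs) _ e'0.
  move=> H; near=> n.
  have Hn : `|0 - c ^+ n| <= e / (N1 w + 1) by near: n; exact: H.
  rewrite /S Sn.
  have -> : (w - M ^+ n.+1 *m w) i 0 = w i 0 - (M ^+ n.+1 *m w) i 0 by rewrite !mxE.
  rewrite opprB addrC subrK.
  apply: le_trans (N1_entry _ i) _; apply: le_trans (Nw n.+1).2 _.
  move: Hn; rewrite sub0r normrN ger0_norm ?exprn_ge0 // => Hn.
  have h1' : c ^+ n.+1 <= c ^+ n by rewrite exprS ler_piMl ?exprn_ge0 // ltW.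
  have E : e / (N1 w + 1) * (N1 w + 1) = e by rewrite divfK // gt_eqF //; lra.
  have hcn : 0 <= c ^+ n.+1 by rewrite exprn_ge0.
  nra.
have der : forall i, ((fun h : R => h^-1 *: (((fun t => pe t i 0) \o shift x1) (h *: 1) - pe x1 i 0)) @ 0^' --> pe x1 0 0 * w i 0)%classic.
  move=> i; apply/cvgrPdist_le => e e0.
  pose K := `|w i 0| * `|w 0 0| + 1.
  have K0 : 0 < K by rewrite /K ltr_pwDr // mulr_ge0.
  case/andP: (h1) => a1 a2.
  have r0 : 0 < Num.min (Num.min x1 (1 - x1)) (e / K).
    by rewrite !lt_min a1 subr_gt0 a2 divr_gt0.
  near=> h.
  have hne : h != 0 by near: h; exact: nbhs_dnbhs_neq.
  have hr : `|h| < Num.min (Num.min x1 (1 - x1)) (e / K) by near: h; exact: dnbhs0_lt.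
  rewrite /= -[h%:A]/(h * 1) mulr1.
  move: hr; rewrite !lt_min => /andP[/andP[hx1 hx2] he].
  have ht : in01 (h + x1).
    by move/ltr_normlP: hx1 => [? ?]; move/ltr_normlP: hx2 => [? ?]; apply/andP; split; lra.
  have E := rel _ ht; rewrite addrK in E.
  have Ei : pe (h + x1) i 0 = pe x1 i 0 + h * pe (h + x1) 0 0 * w i 0 by rewrite {1}E !mxE.
  have E0 : pe (h + x1) 0 0 = pe x1 0 0 + h * pe (h + x1) 0 0 * w 0 0 by rewrite {1}E !mxE.
  set p := pe (h + x1) 0 0 in Ei E0 *.
  have -> : h^-1 *: (pe (h + x1) i 0 - pe x1 i 0) = p * w i 0.
    rewrite Ei -[h^-1 *: _]/(h^-1 * _).
    by rewrite addrAC subrr add0r -!mulrA mulKf.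
  have -> : pe x1 0 0 = p - h * p * w 0 0 by rewrite {1}E0 addrK.
  have pb := prob_le1 0 (Hst _ ht).1; rewrite -/p in pb.
  have -> : (p - h * p * w 0 0) * w i 0 - p * w i 0 = - (h * p * w 0 0 * w i 0) by ring.
  rewrite normrN !normrM.
  have hK : `|h| * K <= e by rewrite -ler_pdivlMr // ltW.
  have q1 : `|p| <= 1 by case/andP: pb => ? ?; rewrite ger0_norm.
  have := normr_ge0 p; have := normr_ge0 h; have := normr_ge0 (w 0 0); have := normr_ge0 (w i 0).
  rewrite /K in hK; nra.
have L : forall i, limn (S i) = w i 0.
  by move=> i; apply: cvg_lim => //; exact: cvS i.
have D : forall i, derivable (fun t => pe t i 0) x1 1 /\
    derive1 (fun t => pe t i 0) x1 = pe x1 0 0 * w i 0.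
  move=> i; split.
  rewrite /derivable; exact: (cvgP _ (der i)).
  by rewrite derive1E; apply: cvg_lim => //; exact: der i.
split.
  move=> i; rewrite L; split; [exact: cvS i | exact: D i].
move=> u; congr (_ * _); rewrite mulr_sumr; apply: eq_bigr => i _.
by rewrite (D i).2 L mulrA.
Unshelve. all: by end_near.
Qed.
End Aux.
Unset Implicit Arguments.

Theorem mainTheorem1 (R : realType) (x1 x2 x3 x4 y1 y2 y3 y4 : R)
  (pe : R -> 'cV[R]_4) :
  in01 x1 -> in01 x2 -> in01 x3 -> in01 x4 ->
  in01 y1 -> in01 y2 -> in01 y3 -> in01 y4 ->
  (* pe t is the (unique) stationary distribution of M as a function of x1 = t *)
  (forall t : R, in01 t ->
     stationary (transM t x2 x3 x4 y1 y2 y3 y4) (pe t)) ->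
  let M := transM x1 x2 x3 x4 y1 y2 y3 y4 in
  let dv := cv4 y1 (1 - y1) 0 0 - cv4 0 0 y1 (1 - y1) in
  let S := fun (i : 'I_4) (n : nat) =>
             (\sum_(t < n.+1) (M ^+ t *m dv)) i 0 in
  (forall i : 'I_4,
     cvgn (S i) /\
     derivable (fun t => pe t i 0) x1 1 /\
     derive1 (fun t => pe t i 0) x1 = pe x1 0 0 * limn (S i)) /\
  (forall u : 'cV[R]_4,
     x1 * (1 - x1) * (pe x1 0 0 * \sum_(i < 4) limn (S i) * u i 0)
     = x1 * (1 - x1) * \sum_(i < 4) derive1 (fun t => pe t i 0) x1 * u i 0).
Proof. exact: Aux.main_aux. Qed.
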